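(* Let $F=(T_1,\dots,T_b)$ be a tree ensemble with input dimension $n$ and output dimension $m$ in which every leaf region is a box, and write $T_r=\{(X_{r,1},\bar y_{r,1}),\dots,(X_{r,k_r},\bar y_{r,k_r})\}$. Let $\hat X$ be a box none of whose components is $\bot$. For every choice of indices $(j_1,\dots,j_b)$ with $1\le j_r\le k_r$, put $$\hat Y_{j_1,\dots,j_b}=\hat X\sqcap\alpha_n(X_{1,j_1})\sqcap\dots\sqcap\alpha_n(X_{b,j_b}).$$ Then (i) whenever no component of $\hat Y_{j_1,\dots,j_b}$ is $\bot$, the set $\gamma_m\big(\hat f(\hat Y_{j_1,\dots,j_b};F)\big)$ has exactly one element; and (ii) the sets $\gamma_n(\hat Y_{j_1,\dots,j_b})$, over those index choices for which no component of $\hat Y_{j_1,\dots,j_b}$ is $\bot$, are pairwise disjoint and their union is $\gamma_n(\hat X)$.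
   Context: Setting (interval abstract interpretation). $\mathcal{D}\subset\mathbb{R}$ is a fixed finite nonempty set, ordered by $\le$. Input intervals: $\bot$ and $[l,u]$ with $l,u\in\mathcal D$, $l\le u$; $\gamma([l,u])=\{v\in\mathcal D:l\le v\le u\}$, $\gamma(\bot)=\emptyset$; $\alpha(V)=[\min V,\max V]$ for nonempty $V\subseteq\mathcal D$, $\alpha(\emptyset)=\bot$; meet $[l,u]\sqcap[l',u']=\bot$ if $\max(l,l')>\min(u,u')$, else $[\max(l,l'),\min(u,u')]$; $\bot\sqcap\hat v=\bot$. Output (real) intervals: $\bot$ and $[l,u]$, $l\le u$ real; $\gamma([l,u])=\{v\in\mathbb R:l\le v\le u\}$; $\alpha(V)=[\min V,\max V]$ for finite nonempty $V\subset\mathbb R$, $\alpha(\emptyset)=\bot$; $[a,b]+[c,d]=[a+c,b+d]$, $\bot+\hat v=\bot$. For sets of tuples $\alpha_n(X)=(\alpha(\pi_1X),\dots,\alpha(\pi_nX))$; a box is a tuple $(\hat x_1,\dots,\hat x_n)$ of input intervals, with $\gamma_n(\hat x_1,\dots,\hat x_n)=\prod_i\gamma(\hat x_i)$; meet of boxes componentwise; ''$\hat X\sqcap\hat Y\ne\bot$'' means no component is $\bot$. $\alpha_m,\gamma_m$ on $\mathbb R^m$ are componentwise likewise. Decision tree $T=\{(X_1,\bar y_1),\dots,(X_k,\bar y_k)\}$: $X_1,\dots,X_k$ partition $\mathcal D^n$, $\bar y_j\in\mathbb R^m$; $t(\bar x;T)=\bar y_j$ iff $\bar x\in X_j$; tree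 transformer $\hat t(\hat X;T)=\alpha_m(\{\bar y_j:\hat X\sqcap\alpha_n(X_j)\ne\bot\})$. A leaf region $X_j$ is a box if $X_j=\gamma_n(\alpha_n(X_j))$ (i.e. it is a product of sets of the form $\{v\in\mathcal D:l\le v\le u\}$); this holds for trees with univariate threshold rules. Ensemble $F=(T_1,\dots,T_b)$: $f(\bar x;F)=\sum_i t(\bar x;T_i)$, ensemble transformer $\hat f(\hat X;F)=\sum_i\hat t(\hat X;T_i)$. *)

(* Defs.v *)
From HB Require Import structures.
From mathcomp Require Import all_boot all_order all_algebra.
From mathcomp Require Import reals.
Set Implicit Arguments. Unset Strict Implicit. Unset Printing Implicit Defensive.
Import Order.TTheory GRing.Theory Num.Theory.
Local Open Scope ring_scope.

Section IntervalAI.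
Variable R : realType.
(* the finite nonempty domain D, given as a list of its elements *)
Variable D : seq R.

Definition dom := seq_sub D.

(* interval values (input and output): None = bot, Some (l, u) = [l, u] *)
Definition itv := option (R * R).

Definition itv_wf (a : itv) : bool :=
  match a with None => true | Some (l, u) => [&& l \in D, u \in D & l <= u] end.

Definition gamma_in (a : itv) (v : dom) : bool :=
  match a with None => false | Some (l, u) => (l <= val v) && (val v <= u) end.

Definition alpha_in (V : {set dom}) : itv :=
  match [pick v in V] with
  | None => None
  | Some v0 => Some (\big[Num.min/val v0]_(v in V) val v,
                     \big[Num.max/val v0]_(v in V) val v)
  end.

Definition meet_in (a b : itv) : itv :=
  match a, b with
  | Some (l, u), Some (l', u') =>
      if Num.max l l' > Num.min u u' then None
      else Some (Num.max l l', Num.min u u')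
  | _, _ => None
  end.

Definition gamma_out (a : itv) (v : R) : bool :=
  match a with None => false | Some (l, u) => (l <= v) && (v <= u) end.

(* abstraction of a finite set of reals, given by a list of its elements *)
Definition alpha_out (s : seq R) : itv :=
  match s with
  | [::] => None
  | v0 :: _ => Some (\big[Num.min/v0]_(v <- s) v, \big[Num.max/v0]_(v <- s) v)
  end.

Definition add_out (a b : itv) : itv :=
  match a, b with
  | Some (a1, b1), Some (c1, d1) => Some (a1 + c1, b1 + d1)
  | _, _ => None
  end.

Variables n m : nat.

Definition pt := {ffun 'I_n -> dom}.

Definition box := 'I_n -> itv.

Definition gamma_n (B : box) : {set pt} :=
  [set x : pt | [forall i, gamma_in (B i) (x i)]].

Definition alpha_n (X : {set pt}) : box :=
  fun i => alpha_in [set (x : pt) i | x in X].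

Definition meet_n (B B' : box) : box := fun i => meet_in (B i) (B' i).

Definition nonbot_n (B : box) : bool := [forall i, B i != None].

Definition obox := 'I_m -> itv.
Definition gamma_m (B : obox) (y : {ffun 'I_m -> R}) : bool :=
  [forall i, gamma_out (B i) (y i)].

(* a decision tree {(X_1,y_1),...,(X_k,y_k)} *)
Record dtree := DTree {
  nleaves : nat;
  region : 'I_nleaves -> {set pt};
  leafval : 'I_nleaves -> {ffun 'I_m -> R} }.
Arguments region d j : clear implicits.
Arguments leafval d j : clear implicits.

Definition is_tree (T : dtree) : Prop :=
  forall x : pt, exists! j, x \in region T j.

(* every leaf region is a box *)
Definition leaves_are_boxes (T : dtree) : Prop :=
  forall j, region T j = gamma_n (alpha_n (region T j)).

Definition tree_tf (T : dtree) (B : box) : obox :=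
  fun i => alpha_out [seq leafval T j i | j <- enum 'I_(nleaves T)
                        & nonbot_n (meet_n B (alpha_n (region T j)))].

Definition ens_tf (b : nat) (F : 'I_b -> dtree) (B : box) : obox :=
  fun i => \big[add_out/Some (0, 0)]_(r < b) tree_tf (F r) B i.

Definition Yhat (b : nat) (F : 'I_b -> dtree) (Xh : box)
    (J : {dffun forall r : 'I_b, 'I_(nleaves (F r))}) : box :=
  foldl (fun acc r => meet_n acc (alpha_n (region (F r) (J r)))) Xh (enum 'I_b).

End IntervalAI.
Arguments region {R D n m} d j.
Arguments leafval {R D n m} d j.
Arguments Yhat {R D n m b} F Xh J.
Arguments ens_tf {R D n m b} F B i.
Arguments tree_tf {R D n m} T B i.

(* Main.v *)
Require Import Defs.
From HB Require Import structures.
From mathcomp Require Import all_boot all_order all_algebra.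
From mathcomp Require Import reals.
Import Order.TTheory GRing.Theory Num.Theory.
Local Open Scope ring_scope.

Set Implicit Arguments.
Section Aux.
Variable R : realType.
Variable D : seq R.
Variables n m : nat.

Lemma gamma_meet_in (a b : itv R) (v : dom D) :
  gamma_in (meet_in a b) v = gamma_in a v && gamma_in b v.
Proof.
case: a => [[l u]|]; case: b => [[l' u']|] //=; last by rewrite andbF.
case: ltP => H /=.
  apply/esym/negP => /andP[/andP[a b] /andP[c d]].
  have : Num.max l l' <= Num.min u u'.
    apply: (@le_trans _ _ (val v)); first by rewrite ge_max a c.
    by rewrite le_min b d.
  by rewrite leNgt H.
rewrite ge_max le_min.
by do ![case: (_ <= _)].
Qed.

Lemma gamma_meet_n (B B' : box R n) :
  gamma_n D (meet_n B B') = gamma_n D B :&: gamma_n D B'.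
Proof.
apply/setP => x; rewrite !inE.
apply/forallP/andP => [H|[/forallP H1 /forallP H2]].
  by split; apply/forallP => i; move: (H i); rewrite /meet_n gamma_meet_in => /andP[].
by move=> i; rewrite /meet_n gamma_meet_in H1 H2.
Qed.

Definition wfl (a : itv R) : bool :=
  if a is Some (l, u) then (l \in D) && (l <= u) else true.

Lemma wfl_meet a b : wfl a -> wfl b -> wfl (meet_in a b).
Proof.
case: a => [[l u]|] //; case: b => [[l' u']|] //= /andP[lD lu] /andP[l'D l'u].
case: ltP => //= H; rewrite H andbT.
rewrite /Order.max; by case: ifP.
Qed.

Lemma wfl_alpha (V : {set dom D}) : wfl (alpha_in V).
Proof.
rewrite /alpha_in; case: pickP => [v0 _|] //=.
apply/andP; split.
  apply: (big_rec (fun x => x \in D)); first exact: (valP v0).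
  move=> i x _ Hx; rewrite /Order.min; case: ifP => // _; exact: (valP i).
apply: (@le_trans _ _ (val v0)).
  apply: (big_rec (fun x => x <= val v0)) => // i x _ Hx.
  by rewrite ge_min Hx orbT.
apply: (big_rec (fun x => val v0 <= x)) => // i x _ Hx.
by rewrite le_max Hx orbT.
Qed.

Lemma ne_gamma (B : box R n) :
  (forall i, wfl (B i)) -> nonbot_n B -> exists x : pt D n, x \in gamma_n D B.
Proof.
move=> Hw /forallP Hnb.
have : forall i, exists v : dom D, gamma_in (B i) v.
  move=> i; move: (Hw i) (Hnb i); case: (B i) => [[l u]|]; last by rewrite eqxx.
  move=> /andP[lD lu] _.
  by exists (SeqSub lD); rewrite /= lexx lu.
case/fin_all_exists => f Hf.
exists [ffun i => f i]; rewrite inE; apply/forallP => i; rewrite ffunE; exact: Hf.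
Qed.

Lemma nonbot_of_mem (B : box R n) (x : pt D n) : x \in gamma_n D B -> nonbot_n B.
Proof.
rewrite inE => /forallP H; apply/forallP => i; move: (H i); by case: (B i).
Qed.

Lemma foldl_gamma b (F : 'I_b -> dtree D n m)
  (J : {dffun forall r : 'I_b, 'I_(nleaves (F r))}) (x : pt D n) :
  (forall r, leaves_are_boxes (F r)) ->
  forall s (acc : box R n),
  x \in gamma_n D (foldl (fun acc r => meet_n acc (alpha_n (region (F r) (J r)))) acc s)
  = (x \in gamma_n D acc) && all (fun r => x \in region (F r) (J r)) s.
Proof.
move=> Hb; elim=> [|r s IH] acc /=; first by rewrite andbT.
by rewrite IH gamma_meet_n in_setI -(Hb r (J r)) andbA.
Qed.

Lemma foldl_wf b (F : 'I_b -> dtree D n m)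
  (J : {dffun forall r : 'I_b, 'I_(nleaves (F r))}) :
  forall s (acc : box R n), (forall i, wfl (acc i)) -> forall i,
  wfl (foldl (fun acc r => meet_n acc (alpha_n (region (F r) (J r)))) acc s i).
Proof.
elim=> [|r s IH] acc Hacc i //=.
apply: IH => j; rewrite /meet_n; apply: wfl_meet => //; exact: wfl_alpha.
Qed.

End Aux.

Theorem mainTheorem6 (R : realType) (D : seq R) (n m b : nat)
    (F : 'I_b -> dtree D n m) (Xh : box R n) :
  D != [::] ->
  (forall r, is_tree (F r)) ->
  (forall r, leaves_are_boxes (F r)) ->
  (forall i, itv_wf D (Xh i)) ->
  nonbot_n Xh ->
  (forall J, nonbot_n (Yhat F Xh J) ->
     exists! y : {ffun 'I_m -> R}, gamma_m (ens_tf F (Yhat F Xh J)) y) /\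
  ((forall J J', J != J' -> nonbot_n (Yhat F Xh J) -> nonbot_n (Yhat F Xh J') ->
      [disjoint gamma_n D (Yhat F Xh J) & gamma_n D (Yhat F Xh J')]) /\
   gamma_n D Xh = \bigcup_(J | nonbot_n (Yhat F Xh J)) gamma_n D (Yhat F Xh J)).
Proof.
move=> _ Htree Hbox Hwf _.
have gY : forall J x, x \in gamma_n D (Yhat F Xh J) =
    (x \in gamma_n D Xh) && [forall r, x \in region (F r) (J r)].
  move=> J x; rewrite /Yhat foldl_gamma //; congr (_ && _).
  apply/allP/forallP => H r; last by move=> _; exact: H.
  by apply: H; rewrite mem_enum.
have tree_uniq : forall r j j' x, x \in region (F r) j -> x \in region (F r) j' -> j = j'.
  move=> r j j' x Hj Hj'; case: (Htree r x) => j0 [_ Hu].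
  by rewrite -(Hu j) // -(Hu j').
have wX : forall i, @wfl R D (Xh i).
  move=> i; move: (Hwf i); case: (Xh i) => [[l u]|] //= /and3P[-> _ ->].
  done.
have wY : forall J i, @wfl R D (Yhat F Xh J i).
  move=> J i; exact: foldl_wf.
split.
  move=> J HJ.
  have [x0 Hx0] := @ne_gamma _ D _ _ (wY J) HJ.
  have key : forall r j, nonbot_n (meet_n (Yhat F Xh J) (alpha_n (region (F r) j)))
                         = (j == J r).
    move=> r j; apply/idP/eqP => [Hnb|->].
      have [x Hx] := @ne_gamma _ D _ _ (fun i => @wfl_meet _ D _ _ (wY J i) (wfl_alpha _)) Hnb.
      move: Hx; rewrite gamma_meet_n in_setI -(Hbox r) gY.
      move=> /andP[/andP[_ /forallP Hr] Hj].
      exact: tree_uniq Hj (Hr r).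
    apply: (nonbot_of_mem (x := x0)).
    rewrite gamma_meet_n in_setI -(Hbox r) Hx0 /=.
    by move: Hx0; rewrite gY => /andP[_ /forallP]; apply.
  have tt : forall r i, tree_tf (F r) (Yhat F Xh J) i =
      Some (leafval (F r) (J r) i, leafval (F r) (J r) i).
    move=> r i; rewrite /tree_tf (@eq_filter _ _ (pred1 (J r))); last exact: key r.
    rewrite filter_pred1_uniq ?enum_uniq ?mem_enum //=.
    by rewrite !big_cons !big_nil minxx maxxx.
  pose s i := \sum_(r < b) leafval (F r) (J r) i.
  have E : forall i, ens_tf F (Yhat F Xh J) i = Some (s i, s i).
    move=> i; rewrite /ens_tf /s.
    under eq_bigr do rewrite tt.
    apply: (big_rec2 (fun a c => a = Some (c, c))) => // r y1 y2 _ ->.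
    done.
  exists [ffun i => s i]; split.
    by apply/forallP => i; rewrite E ffunE /= lexx.
  move=> y /forallP H; apply/ffunP => i; move: (H i); rewrite E ffunE /=.
  by move=> /andP[a c]; apply/le_anti; rewrite a c.
split.
  move=> J J' HJJ _ _; rewrite disjoint_subset; apply/subsetP => x H1x.
  apply/negP => H2x; move: H1x H2x.
  rewrite !gY => /andP[_ /forallP H1] /andP[_ /forallP H2].
  move/eqP: HJJ; apply; apply/ffunP => r; exact: tree_uniq (H1 r) (H2 r).
apply/setP => x; apply/idP/bigcupP => [Hx|[J _]]; last by rewrite gY => /andP[].
have : forall r, exists j, x \in region (F r) j.
  by move=> r; case: (Htree r x) => j [Hj _]; exists j.
case/fin_all_exists => f Hf.
pose J := (finfun f : {dffun forall r : 'I_b, 'I_(nleaves (F r))}).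
have HxJ : x \in gamma_n D (Yhat F Xh J).
  by rewrite gY Hx; apply/forallP => r; rewrite ffunE.
exists J => //; exact: nonbot_of_mem HxJ.
Qed.
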